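(* The assignment $H_3\mapsto E^2$, $H_1\mapsto\tilde B E$, $C_{18}\mapsto \mathrm{diag}(e^{-7i\pi/9},e^{2i\pi/9},e^{5i\pi/9})$, $C_6\mapsto\mathrm{diag}(e^{i\pi/3},-1,e^{2i\pi/3})$ extends to a group isomorphism $g:Fr(162\times 4)\to D(18,1,1;2,1,1)$. (In terms of generators, $g(C_{18})=F^2(E^2FEF^{-1})^3$ and $g(C_6)=E\,g(C_{18})E^{-2}g(C_{18})^8E^{-2}g(C_{18})^3$.) In particular $Fr(162\times 4)\cong D(18,1,1;2,1,1)$.
   Context: Let $\omega=e^{2i\pi/3}$, $J$ the $3\times3$ antidiagonal matrix with antidiagonal entries $1$. $G_1=\mathrm{diag}(e^{7i\pi/9},-e^{4i\pi/9},-e^{7i\pi/9})$, $G_2=\begin{pmatrix}-\tfrac12 e^{4i\pi/9}&\tfrac{1}{\sqrt2}e^{7i\pi/9}&\tfrac12 e^{4i\pi/9}\\ \tfrac{1}{\sqrt2}e^{7i\pi/9}&0&\tfrac{1}{\sqrt2}e^{7i\pi/9}\\ \tfrac12 e^{4i\pi/9}&\tfrac{1}{\sqrt2}e^{7i\pi/9}&-\tfrac12 e^{4i\pi/9}\end{pmatrix}$, $FUM=-\omega J$, $Fr(162\times 4)=\langle G_1,G_2,FUM\rangle\subset SU(3)$. Let $A=G_1G_2^2G_1^{-1}$, $B=G_1G_2^{-2}G_1$, $C_{18}=A(FUM)^3$, $C_6=B\,G_1(FUM)^3G_1^{-1}$, $H_1=\begin{pmatrix}-\frac12&-\frac1{\sqrt2}&-\frac12\\-\frac1{\sqrt2}&0&\frac1{\sqrt2}\\-\frac12&\frac1{\sqrt2}&-\frac12\end{pmatrix}$,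 $H_3=\begin{pmatrix}\frac12&\frac1{\sqrt2}&-\frac12\\\frac1{\sqrt2}&0&\frac1{\sqrt2}\\\frac12&-\frac1{\sqrt2}&-\frac12\end{pmatrix}$; $C_6,C_{18},H_1,H_3$ generate $Fr(162\times4)$. $D(18,1,1;2,1,1)=\langle F,E,\tilde B\rangle\subset SU(3)$ with $F=\mathrm{diag}(e^{i\pi/9},e^{i\pi/9},e^{-2i\pi/9})$, $E=\begin{pmatrix}0&1&0\\0&0&1\\1&0&0\end{pmatrix}$, $\tilde B=\begin{pmatrix}-1&0&0\\0&0&-1\\0&-1&0\end{pmatrix}$. *)

(* Defs.v *)
From HB Require Import structures.
From mathcomp Require Import all_boot all_order all_algebra all_field.
Set Implicit Arguments. Unset Strict Implicit. Unset Printing Implicit Defensive.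
Import Order.TTheory GRing.Theory Num.Theory.
Local Open Scope ring_scope.

Notation M3 := 'M[algC]_3.

Definition mx3 (a b c d e f g h k : algC) : M3 :=
  \matrix_(i < 3, j < 3)
    nth 0 (nth [::] [:: [:: a; b; c]; [:: d; e; f]; [:: g; h; k]] i) j.

Definition diag3 (a b c : algC) : M3 := mx3 a 0 0 0 b 0 0 0 c.

(* zeta = e^{i pi/9}: the 9th root of -1 of minimal nonnegative argument *)
Definition zeta : algC := 9.-root (-1).
Definition ez (k : int) : algC := zeta ^ k.
Definition s2 : algC := sqrtC 2.
Definition omega : algC := ez 6.

Definition Jmx : M3 := mx3 0 0 1 0 1 0 1 0 0.

Definition G1 : M3 := diag3 (ez 7) (- ez 4) (- ez 7).
Definition G2 : M3 :=
  mx3 (- (ez 4 / 2)) (ez 7 / s2) (ez 4 / 2)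
      (ez 7 / s2)    0           (ez 7 / s2)
      (ez 4 / 2)     (ez 7 / s2) (- (ez 4 / 2)).
Definition FUM : M3 := - (omega *: Jmx).

Definition Amx : M3 := G1 * G2 ^+ 2 * G1^-1.
Definition Bmx : M3 := G1 * (G2 ^+ 2)^-1 * G1.
Definition C18 : M3 := Amx * FUM ^+ 3.
Definition C6 : M3 := Bmx * G1 * FUM ^+ 3 * G1^-1.
Definition H1 : M3 :=
  mx3 (- (1/2)) (- s2^-1) (- (1/2))
      (- s2^-1) 0 s2^-1
      (- (1/2)) s2^-1 (- (1/2)).
Definition H3 : M3 :=
  mx3 (1/2) s2^-1 (- (1/2))
      s2^-1 0 s2^-1
      (1/2) (- s2^-1) (- (1/2)).

Definition Fmx : M3 := diag3 (ez 1) (ez 1) (ez (-2)).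
Definition Emx : M3 := mx3 0 1 0 0 0 1 1 0 0.
Definition Btil : M3 := mx3 (-1) 0 0 0 0 (-1) 0 (-1) 0.

Inductive gen (S : seq M3) : M3 -> Prop :=
| gen_one : gen S 1
| gen_mul x y : x \in S -> gen S y -> gen S (x * y)
| gen_mulV x y : x \in S -> gen S y -> gen S (x^-1 * y).

Definition Fr162x4 : seq M3 := [:: G1; G2; FUM].
Definition D18 : seq M3 := [:: Fmx; Emx; Btil].

Definition gC18 : M3 := diag3 (ez (-7)) (ez 2) (ez 5).
Definition gC6 : M3 := diag3 (ez 3) (-1) (ez 6).

(* Main.v *)
Require Import Defs.
From HB Require Import structures.
From mathcomp Require Import all_boot all_order all_algebra all_field.
From mathcomp Require Import ring zify.
Import GRing.Theory Num.Theory.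
Local Open Scope ring_scope.

Lemma mx3_mul (a b c d e f g h k a' b' c' d' e' f' g' h' k' : algC) :
  mx3 a b c d e f g h k * mx3 a' b' c' d' e' f' g' h' k' =
  mx3 (a*a'+b*d'+c*g') (a*b'+b*e'+c*h') (a*c'+b*f'+c*k')
      (d*a'+e*d'+f*g') (d*b'+e*e'+f*h') (d*c'+e*f'+f*k')
      (g*a'+h*d'+k*g') (g*b'+h*e'+k*h') (g*c'+h*f'+k*k').
Proof.
apply/matrixP => i j; rewrite !mxE !big_ord_recr big_ord0 /= !mxE add0r.
by case: i => [[|[|[|i]]] Hi]; case: j => [[|[|[|j]]] Hj].
Qed.

Lemma mx3_eq a b c d e f g h k a' b' c' d' e' f' g' h' k' :
  a = a' -> b = b' -> c = c' -> d = d' -> e = e' -> f = f' -> g = g' -> h = h' -> k = k' ->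
  mx3 a b c d e f g h k = mx3 a' b' c' d' e' f' g' h' k'.
Proof. by move=> -> -> -> -> -> -> -> -> ->. Qed.

Lemma mx3_one : 1 = mx3 1 0 0 0 1 0 0 0 1 :> M3.
Proof.
apply/matrixP => i j; rewrite !mxE.
by case: i => [[|[|[|i]]] Hi]; case: j => [[|[|[|j]]] Hj].
Qed.

Lemma z9 : zeta ^+ 9 = -1.
Proof. exact: (@rootCK _ 9). Qed.
Lemma s22 : s2 ^+ 2 = 2.
Proof. exact: sqrtCK. Qed.
Lemma s2n0 : s2 != 0.
Proof. by rewrite /s2 sqrtC_eq0 pnatr_eq0. Qed.

Lemma ezn (n : nat) : ez n%:R = zeta ^+ n.
Proof. rewrite /ez. rewrite natz. by rewrite exprnP. Qed.

Ltac fld := field; rewrite ?pnatr_eq0 ?s2n0 //.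
Tactic Notation "fld_" constr_list(L) := field: L; rewrite ?pnatr_eq0 ?s2n0 //.
Definition Pm : M3 := mx3 0 s2 0 1 0 (-1) 1 0 1.
Definition Qm : M3 := mx3 0 (1/2) (1/2) (s2^-1) 0 0 0 (-(1/2)) (1/2).

Lemma PQ : Pm * Qm = 1.
Proof.
rewrite mx3_mul mx3_one; have := s2n0 => ?; apply: mx3_eq; fld.
Qed.
Lemma QP : Qm * Pm = 1.
Proof.
rewrite mx3_mul mx3_one; have := s2n0 => ?; apply: mx3_eq; fld.
Qed.
Lemma hG1 : Pm * G1 * Qm = mx3 (zeta^+13) 0 0 0 0 (zeta^+7) 0 (zeta^+7) 0.
Proof.
rewrite /G1 /diag3 !mx3_mul !ezn; have := s2n0 => ?; have := z9 => H.
apply: mx3_eq; fld_ H.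
Qed.
Lemma hG2 : Pm * G2 * Qm = mx3 0 0 (zeta^+7) 0 (zeta^+13) 0 (zeta^+7) 0 0.
Proof.
rewrite /G2 /diag3 !mx3_mul !ezn; have := s2n0 => ?; have := z9 => H; have := s22 => H2.
apply: mx3_eq; fld_ H H2.
Qed.

Definition ev (s a : nat -> nat) : M3 :=
  \matrix_(i < 3, j < 3) if (j : nat) == s i then zeta ^+ a i else 0.
Definition f3 (x y z : nat) : nat -> nat :=
  fun i => match i with 0 => x | 1 => y | _ => z end.
Definition mono := ((nat -> nat) * (nat -> nat))%type.
Definition evm (m : mono) := ev m.1 m.2.
Definition mmul (m n : mono) : mono :=
  (fun i => n.1 (m.1 i), fun i => (m.2 i + n.2 (m.1 i))%N).
Definition valid (s : nat -> nat) := [&& s 0 < 3, s 1 < 3 & s 2 < 3]%N.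
Definition inv3 (a : nat -> nat) := ((a 1 %% 3 == a 0 %% 3) && (a 2 %% 3 == a 0 %% 3))%N.
Definition good (m : mono) := valid m.1 && inv3 m.2.
Definition meq (m n : mono) :=
  [&& m.1 0 == n.1 0, m.1 1 == n.1 1, m.1 2 == n.1 2,
      m.2 0 %% 18 == n.2 0 %% 18, m.2 1 %% 18 == n.2 1 %% 18
    & m.2 2 %% 18 == n.2 2 %% 18]%N.

Lemma z18 : zeta ^+ 18 = 1.
Proof. by rewrite (_ : 18 = 9 * 2)%N // exprM z9 sqrrN expr1n. Qed.

Lemma ev_mx3 s a : ev s a =
  mx3 (if 0%N == s 0 then zeta ^+ a 0 else 0) (if 1%N == s 0 then zeta ^+ a 0 else 0)
      (if 2%N == s 0 then zeta ^+ a 0 else 0)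
      (if 0%N == s 1 then zeta ^+ a 1 else 0) (if 1%N == s 1 then zeta ^+ a 1 else 0)
      (if 2%N == s 1 then zeta ^+ a 1 else 0)
      (if 0%N == s 2 then zeta ^+ a 2 else 0) (if 1%N == s 2 then zeta ^+ a 2 else 0)
      (if 2%N == s 2 then zeta ^+ a 2 else 0).
Proof.
apply/matrixP => i j; rewrite !mxE.
by case: i => [[|[|[|i]]] Hi]; case: j => [[|[|[|j]]] Hj].
Qed.

Lemma valid_ord s (i : 'I_3) : valid s -> (s i < 3)%N.
Proof. by case/and3P; case: i => [[|[|[|i]]] Hi]. Qed.

Lemma ev_mul s a t b : valid s ->
  ev s a * ev t b = ev (fun i => t (s i)) (fun i => (a i + b (s i))%N).
Proof.
move=> vs; apply/matrixP => i j; rewrite !mxE.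
rewrite (bigD1 (Ordinal (valid_ord _ i vs))) //= big1 ?addr0; last first.
  move=> k /negbTE Hk; rewrite !mxE.
  case: eqP => [Ek|]; last by rewrite mul0r.
  by move: Hk; rewrite -val_eqE /= Ek eqxx.
by rewrite !mxE eqxx; case: eqP; rewrite ?mulr0 // exprD.
Qed.

Lemma evm_mul m n : valid m.1 -> evm m * evm n = evm (mmul m n).
Proof. by move=> v; rewrite /evm ev_mul. Qed.

Lemma ev_ext m n : meq m n -> evm m = evm n.
Proof.
case/and3P => /eqP e0 /eqP e1 /and4P [/eqP e2 /eqP a0 /eqP a1 /eqP a2].
apply/matrixP => i j; rewrite !mxE.
case: i => [[|[|[|i]]] Hi] //=; rewrite -?e0 -?e1 -?e2;
  by rewrite -(expr_mod _ z18) ?a0 ?a1 ?a2 expr_mod // z18.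
Qed.

Lemma ev1 : evm (f3 0 1 2, f3 0 0 0) = 1.
Proof.
apply/matrixP => i j; rewrite !mxE.
by case: i => [[|[|[|i]]] Hi]; case: j => [[|[|[|j]]] Hj].
Qed.

Lemma valid_all s k : valid s -> (k < 3)%N -> (s k < 3)%N.
Proof. by case/and3P; case: k => [|[|[|k]]]. Qed.
Lemma inv3_all a k : inv3 a -> (k < 3)%N -> (a k %% 3 = a 0 %% 3)%N.
Proof. by case/andP => /eqP ? /eqP ?; case: k => [|[|[|k]]]. Qed.

Lemma good_mul m n : good m -> good n -> good (mmul m n).
Proof.
case/andP => vm im /andP [vn iN]; apply/andP; split.
  by apply/and3P; split => /=; apply: (valid_all _ _ vn); apply: (valid_all _ _ vm).
have H k : (k < 3)%N -> ((m.2 k + n.2 (m.1 k)) %% 3 = (m.2 0 + n.2 0) %% 3)%N.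
  move=> Hk; rewrite -modnDm (inv3_all _ _ im Hk) (inv3_all _ _ iN (valid_all _ _ vm Hk)).
  by rewrite modnDm.
by apply/andP; split; rewrite /= H // H.
Qed.

Lemma z6mod x y : (x %% 3 = y %% 3)%N -> zeta ^+ (6 * x) = zeta ^+ (6 * y).
Proof.
move=> H; rewrite -(expr_mod _ z18) -[in RHS](expr_mod _ z18).
by rewrite (_ : 18 = 6 * 3)%N // -!muln_modr H.
Qed.

Definition kap (M : M3) : algC := (\sum_(i < 3) \sum_(j < 3) M i j ^+ 6) / 3.

Lemma kap_ev m : good m -> kap (evm m) = zeta ^+ (6 * m.2 0).
Proof.
case/andP => vm im; rewrite /kap.
have inner (i : 'I_3) : \sum_(j < 3) evm m i j ^+ 6 = zeta ^+ (6 * m.2 0).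
  rewrite (bigD1 (Ordinal (valid_ord _ i vm))) //= big1 ?addr0; last first.
    move=> k /negbTE Hk; rewrite !mxE.
    case: eqP => [Ek|]; last by rewrite expr0n.
    by move: Hk; rewrite -val_eqE /= Ek eqxx.
  rewrite !mxE eqxx -exprM mulnC; apply: z6mod.
  by rewrite (inv3_all _ _ im).
rewrite (eq_bigr _ (fun i _ => inner i)) sumr_const card_ord.
by field.
Qed.

Lemma kapZ c M : kap (c *: M) = c ^+ 6 * kap M.
Proof.
rewrite /kap mulrA; congr (_ / _); rewrite mulr_sumr; apply: eq_bigr => i _.
by rewrite mulr_sumr; apply: eq_bigr => j _; rewrite mxE exprMn.
Qed.

Lemma evZ k m : zeta ^+ k *: evm m = evm (m.1, fun i => (k + m.2 i)%N).
Proof.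
apply/matrixP => i j; rewrite !mxE; case: eqP; rewrite ?mulr0 //.
by rewrite exprD.
Qed.

Lemma gen_cat S x y : gen S x -> gen S y -> gen S (x * y).
Proof.
elim=> [|a b Ha _ IH|a b Ha _ IH] Hy; first by rewrite mul1r.
  by rewrite -mulrA; apply: gen_mul => //; apply: IH.
by rewrite -mulrA; apply: gen_mulV => //; apply: IH.
Qed.

Lemma gen_in S s : s \in S -> gen S s.
Proof. by move=> Hs; rewrite -[s]mulr1; apply: gen_mul => //; apply: gen_one. Qed.
Lemma gen_inV S s : s \in S -> gen S s^-1.
Proof. by move=> Hs; rewrite -[s^-1]mulr1; apply: gen_mulV => //; apply: gen_one. Qed.

Lemma gen_X S x n : gen S x -> gen S (x ^+ n).
Proof.
move=> Hx; elim: n => [|n IH]; first by rewrite expr0; apply: gen_one.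
by rewrite exprS; apply: gen_cat.
Qed.

Definition allU (S : seq M3) := forall s, s \in S -> s \is a GRing.unit.

Lemma gen_unit S x : allU S -> gen S x -> x \is a GRing.unit.
Proof.
move=> U; elim=> [|a b Ha _ IH|a b Ha _ IH]; first exact: unitr1.
  by rewrite unitrMl // U.
by rewrite unitrMl // unitrV U.
Qed.

Lemma gen_inv S x : allU S -> gen S x -> gen S x^-1.
Proof.
move=> U; elim=> [|a b Ha Hb IH|a b Ha Hb IH]; first by rewrite invr1; apply: gen_one.
  have Ua := U _ Ha; have Ub := gen_unit _ _ U Hb.
  by rewrite invrM //; apply: gen_cat => //; apply: gen_inV.
have Ua := U _ Ha; have Ub := gen_unit _ _ U Hb.
rewrite invrM ?unitrV // invrK.
by apply: gen_cat => //; apply: gen_in.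
Qed.

Lemma inv_eq (x y : M3) : x * y = 1 -> x \is a GRing.unit /\ x^-1 = y.
Proof.
move=> H; have [Ux _] := mulmx1_unit H.
have Ux' : x \is a GRing.unit by [].
by split => //; rewrite -[y](mulKr Ux') H mulr1.
Qed.

Lemma mx3_scale c a b d e f g h k l :
  c *: mx3 a b d e f g h k l = mx3 (c*a) (c*b) (c*d) (c*e) (c*f) (c*g) (c*h) (c*k) (c * l).
Proof.
apply/matrixP => i j; rewrite !mxE.
by case: i => [[|[|[|i]]] Hi]; case: j => [[|[|[|j]]] Hj].
Qed.
Lemma mx3_opp a b d e f g h k l :
  - mx3 a b d e f g h k l = mx3 (-a) (-b) (-d) (-e) (-f) (-g) (-h) (-k) (-l).
Proof.
apply/matrixP => i j; rewrite !mxE.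
by case: i => [[|[|[|i]]] Hi]; case: j => [[|[|[|j]]] Hj].
Qed.

Lemma ezneg (n : nat) : (n <= 18)%N -> ez (- n%:R) = zeta ^+ (18 - n).
Proof.
move=> Hn; rewrite /ez natz -exprnN.
have Hz : zeta ^+ n * zeta ^+ (18 - n) = 1 by rewrite -exprD subnKC // z18.
exact: mulr1_eq.
Qed.

Definition mF : mono := (f3 0 1 2, f3 1 1 16).
Definition mE : mono := (f3 1 2 0, f3 0 0 0).
Definition mB : mono := (f3 0 2 1, f3 9 9 9).
Definition mG1 : mono := (f3 0 2 1, f3 13 7 7).
Definition mG2 : mono := (f3 2 1 0, f3 7 13 7).
Definition mFU : mono := (f3 0 1 2, f3 15 6 15).
Definition mH1 : mono := (f3 1 0 2, f3 9 9 9).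
Definition mH3 : mono := (f3 2 0 1, f3 0 0 0).

Lemma Fe : Fmx = evm mF.
Proof. by rewrite /Fmx /diag3 /evm ev_mx3 /= (ezn 1) (ezneg 2). Qed.
Lemma Ee : Emx = evm mE.
Proof. by rewrite /Emx /evm ev_mx3 /= expr0. Qed.
Lemma Be : Btil = evm mB.
Proof. by rewrite /Btil /evm ev_mx3 /= z9. Qed.
Lemma gC18e : gC18 = evm (f3 0 1 2, f3 11 2 5).
Proof. by rewrite /gC18 /diag3 /evm ev_mx3 /= (ezneg 7) // (ezn 2) (ezn 5). Qed.
Lemma gC6e : gC6 = evm (f3 0 1 2, f3 3 9 6).
Proof. by rewrite /gC6 /diag3 /evm ev_mx3 /= (ezn 3) (ezn 6) z9. Qed.

Definition hh (x : M3) := Pm * x * Qm.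

Lemma hG1e : hh G1 = evm mG1.
Proof. by rewrite /hh hG1 /evm ev_mx3. Qed.
Lemma hG2e : hh G2 = evm mG2.
Proof. by rewrite /hh hG2 /evm ev_mx3. Qed.
Lemma hFe : hh FUM = evm mFU.
Proof.
rewrite /hh /FUM /omega /Jmx mx3_scale mx3_opp !mx3_mul /evm ev_mx3 /= (ezn 6).
have := s2n0 => ?; have := z9 => H.
apply: mx3_eq; fld_ H.
Qed.
Lemma hH1e : hh H1 = evm mH1.
Proof.
rewrite /hh /H1 !mx3_mul /evm ev_mx3 /=.
have := s2n0 => ?; have := z9 => H; have := s22 => H2.
apply: mx3_eq; fld_ H H2.
Qed.
Lemma hH3e : hh H3 = evm mH3.
Proof.
rewrite /hh /H3 !mx3_mul /evm ev_mx3 /=.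
have := s2n0 => ?; have := s22 => H2.
apply: mx3_eq; fld_ H2.
Qed.

Arguments inv_eq {x y}.
Definition m1 : mono := (f3 0 1 2, f3 0 0 0).
Ltac monoc := apply: ev_ext; vm_compute; reflexivity.
Ltac evsimp := rewrite ?exprS ?expr0 ?mulr1 ?evm_mul //.

Lemma evinv m m' : valid m.1 -> meq (mmul m m') m1 -> (evm m)^-1 = evm m'.
Proof.
move=> v e; have H : evm m * evm m' = 1 by rewrite evm_mul // -ev1; apply: ev_ext.
by case: (inv_eq H).
Qed.
Lemma evunit m m' : valid m.1 -> meq (mmul m m') m1 -> evm m \is a GRing.unit.
Proof.
move=> v e; have H : evm m * evm m' = 1 by rewrite evm_mul // -ev1; apply: ev_ext.
by case: (inv_eq H).
Qed.

Lemma hhM x y : hh (x * y) = hh x * hh y.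
Proof. by rewrite /hh -!mulrA (mulrA Qm) QP mul1r. Qed.
Lemma hh1 : hh 1 = 1.
Proof. by rewrite /hh mulr1 PQ. Qed.
Lemma unhh x : Qm * hh x * Pm = x.
Proof. by rewrite /hh !mulrA QP mul1r -mulrA QP mulr1. Qed.
Lemma hhV x : x \is a GRing.unit -> hh x^-1 = (hh x)^-1.
Proof.
move=> U; have H : hh x * hh x^-1 = 1 by rewrite -hhM mulrV // hh1.
by case: (inv_eq H) => _ ->.
Qed.
Lemma unit_of_hh x y : hh x * y = 1 -> x \is a GRing.unit.
Proof.
move=> H; have H' : x * (Qm * y * Pm) = 1.
  have -> : x * (Qm * y * Pm) = Qm * (hh x * y) * Pm.
    by rewrite -{1}(unhh x) /hh -!mulrA (mulrA Pm Qm) PQ mul1r.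
  by rewrite H mulr1 QP.
by case: (inv_eq H').
Qed.

Definition mFi : mono := (f3 0 1 2, f3 17 17 2).
Definition mEi : mono := (f3 2 0 1, f3 0 0 0).
Definition mG1i : mono := (f3 0 2 1, f3 5 11 11).
Definition mG2i : mono := (f3 2 1 0, f3 11 5 11).
Definition mFUi : mono := (f3 0 1 2, f3 3 12 3).

Lemma Fi : Fmx^-1 = evm mFi.
Proof. by rewrite Fe; apply: evinv; vm_compute. Qed.
Lemma Ei : Emx^-1 = evm mEi.
Proof. by rewrite Ee; apply: evinv; vm_compute. Qed.
Lemma Bi : Btil^-1 = evm mB.
Proof. by rewrite Be; apply: evinv; vm_compute. Qed.

Lemma allU_D : allU D18.
Proof.
move=> s; rewrite /D18 !inE; case/or3P => /eqP ->.
- by rewrite Fe; apply: (evunit mF mFi); vm_compute.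
- by rewrite Ee; apply: (evunit mE mEi); vm_compute.
- by rewrite Be; apply: (evunit mB mB); vm_compute.
Qed.

Lemma allU_Fr : allU Fr162x4.
Proof.
move=> s; rewrite /Fr162x4 !inE; case/or3P => /eqP ->.
- by apply: (unit_of_hh _ (evm mG1i)); rewrite hG1e evm_mul // -ev1; monoc.
- by apply: (unit_of_hh _ (evm mG2i)); rewrite hG2e evm_mul // -ev1; monoc.
- by apply: (unit_of_hh _ (evm mFUi)); rewrite hFe evm_mul // -ev1; monoc.
Qed.

Lemma inF : Fmx \in D18. Proof. by rewrite /D18 !inE eqxx. Qed.
Lemma inE' : Emx \in D18. Proof. by rewrite /D18 !inE eqxx !orbT. Qed.
Lemma inB : Btil \in D18. Proof. by rewrite /D18 !inE eqxx !orbT. Qed.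
Lemma inG1 : G1 \in Fr162x4. Proof. by rewrite /Fr162x4 !inE eqxx. Qed.
Lemma inG2 : G2 \in Fr162x4. Proof. by rewrite /Fr162x4 !inE eqxx !orbT. Qed.
Lemma inFU : FUM \in Fr162x4. Proof. by rewrite /Fr162x4 !inE eqxx !orbT. Qed.

Ltac gensolve := repeat (apply: gen_cat);
  first [ apply: gen_in; exact: inF | apply: gen_in; exact: inE' | apply: gen_in; exact: inB
        | apply: gen_in; exact: inG1 | apply: gen_in; exact: inG2 | apply: gen_in; exact: inFU ].

Lemma wG1 : hh G1 = Fmx * Fmx * Btil * Fmx * Fmx.
Proof. rewrite hG1e Fe Be; evsimp; monoc. Qed.
Lemma wG2 : hh G2 = Fmx * Fmx * Emx * Btil * Fmx * Fmx.
Proof. rewrite hG2e Fe Ee Be; evsimp; monoc. Qed.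
Lemma wFU : hh FUM = Emx * Emx * Fmx * Fmx * Fmx * Emx * Fmx * Fmx * Fmx.
Proof. rewrite hFe Fe Ee; evsimp; monoc. Qed.

Lemma genD_h a : a \in Fr162x4 -> gen D18 (hh a).
Proof.
rewrite /Fr162x4 !inE; case/or3P => /eqP ->.
- by rewrite wG1; gensolve.
- by rewrite wG2; gensolve.
- by rewrite wFU; gensolve.
Qed.

Lemma wF : Qm * Fmx * Pm = G2 * G2 * G1 * FUM * G1.
Proof.
rewrite -[RHS]unhh !hhM ?hG1e ?hG2e ?hFe Fe; congr (Qm * _ * Pm); evsimp; monoc.
Qed.
Lemma wE : Qm * Emx * Pm = FUM * FUM * G2 * G2 * G2 * G1 * G1 * G1.
Proof.
rewrite -[RHS]unhh !hhM ?hG1e ?hG2e ?hFe Ee; congr (Qm * _ * Pm); evsimp; monoc.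
Qed.
Lemma wB : Qm * Btil * Pm = FUM * FUM * FUM * FUM * G1 * G1 * G1.
Proof.
rewrite -[RHS]unhh !hhM ?hG1e ?hG2e ?hFe Be; congr (Qm * _ * Pm); evsimp; monoc.
Qed.

Lemma genFr_Q a : a \in D18 -> gen Fr162x4 (Qm * a * Pm).
Proof.
rewrite /D18 !inE; case/or3P => /eqP ->.
- by rewrite wF; gensolve.
- by rewrite wE; gensolve.
- by rewrite wB; gensolve.
Qed.

Lemma L_hD x : gen Fr162x4 x -> gen D18 (hh x).
Proof.
elim=> [|a b Ha _ IH|a b Ha _ IH]; first by rewrite hh1; apply: gen_one.
  by rewrite hhM; apply: gen_cat => //; apply: genD_h.
have Ua := allU_Fr _ Ha; rewrite hhM hhV //; apply: gen_cat => //.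
by apply: gen_inv; [exact: allU_D | apply: genD_h].
Qed.

Lemma QM x y : Qm * (x * y) * Pm = (Qm * x * Pm) * (Qm * y * Pm).
Proof. by rewrite -!mulrA (mulrA Pm Qm) PQ mul1r. Qed.

Lemma L_QFr z : gen D18 z -> gen Fr162x4 (Qm * z * Pm).
Proof.
elim=> [|a b Ha _ IH|a b Ha _ IH]; first by rewrite mulr1 QP; apply: gen_one.
  by rewrite QM; apply: gen_cat => //; apply: genFr_Q.
rewrite QM; apply: gen_cat => //.
have Ua := allU_D _ Ha.
have -> : Qm * a^-1 * Pm = (Qm * a * Pm)^-1.
  have H : (Qm * a * Pm) * (Qm * a^-1 * Pm) = 1 by rewrite -QM mulrV // mulr1 QP.
  by case: (inv_eq H) => _ ->.
by apply: gen_inv; [exact: allU_Fr | apply: genFr_Q].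
Qed.

Lemma L_Dev z : gen D18 z -> exists2 m, good m & z = evm m.
Proof.
elim=> [|a b Ha _ [m gm ->]|a b Ha _ [m gm ->]].
- by exists m1 => //; rewrite ev1.
- move: Ha; rewrite /D18 !inE; case/or3P => /eqP ->;
  [ exists (mmul mF m) | exists (mmul mE m) | exists (mmul mB m) ];
  rewrite ?Fe ?Ee ?Be ?evm_mul //; exact: good_mul.
- move: Ha; rewrite /D18 !inE; case/or3P => /eqP ->;
  [ exists (mmul mFi m) | exists (mmul mEi m) | exists (mmul mB m) ];
  rewrite ?Fi ?Ei ?Bi ?evm_mul //; exact: good_mul.
Qed.

Definition gmap (x : M3) : M3 := kap (hh x) ^+ 2 *: hh x.

Lemma zc_pow k n : zeta ^+ (6 * k) ^+ (3 * n) = 1.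
Proof.
rewrite -exprM (_ : (6 * k * (3 * n) = 18 * (k * n))%N); last by lia.
by rewrite exprM z18 expr1n.
Qed.

Lemma F6 : Fmx ^+ 6 = zeta ^+ 6 *: 1.
Proof.
rewrite -ev1 evZ Fe; evsimp; monoc.
Qed.

Lemma gen_scal M k : gen D18 M -> gen D18 (zeta ^+ (6 * k) *: M).
Proof.
move=> HM.
have -> : zeta ^+ (6 * k) = zeta ^+ (6 * (k %% 3)) by apply: z6mod; rewrite modn_mod.
have : (k %% 3 < 3)%N by rewrite ltn_mod.
case: (k %% 3)%N => [|[|[|//]]] _.
- by rewrite muln0 expr0 scale1r.
- rewrite muln1 -[M]mul1r scalerAl -F6; apply: gen_cat => //.
  by apply: gen_X; apply: gen_in; exact: inF.
- rewrite exprM -[M]mul1r scalerAl.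
  have -> : (zeta ^+ 6 ^+ 2) *: (1 : M3) = Fmx ^+ 6 * Fmx ^+ 6.
    by rewrite F6 -scalerAl mul1r scalerA.
  by apply: gen_cat => //; apply: gen_cat; apply: gen_X; apply: gen_in; exact: inF.
Qed.

Lemma gmap_ev x m : hh x = evm m -> good m ->
  gmap x = evm (m.1, fun i => (12 * m.2 0 + m.2 i)%N).
Proof.
move=> Hx gm; rewrite /gmap Hx kap_ev // -exprM evZ.
by rewrite (_ : 6 * m.2 0 * 2 = 12 * m.2 0)%N // mulnC mulnA.
Qed.

Lemma zeta_neq0 : zeta != 0.
Proof. by apply/negP => /eqP H; move: z9; rewrite H expr0n /= => /eqP; rewrite eq_sym oppr_eq0 oner_eq0. Qed.

Lemma kap_g x m : hh x = evm m -> good m -> kap (gmap x) = kap (hh x).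
Proof.
move=> Hx gm; rewrite /gmap kapZ Hx kap_ev // -exprM (_ : (2 * 6 = 3 * 4)%N) //.
by rewrite zc_pow mul1r.
Qed.

Lemma hhQ w : hh (Qm * w * Pm) = w.
Proof. by rewrite /hh !mulrA PQ mul1r -mulrA PQ mulr1. Qed.

Definition mC18 : mono := (f3 0 1 2, f3 5 14 17).
Definition mC6 : mono := (f3 0 1 2, f3 3 9 6).

Lemma hC18 : hh C18 = evm mC18.
Proof.
have U1 := allU_Fr _ inG1.
rewrite /C18 /Amx !exprS !expr0 !mulr1 !hhM hhV // hG1e hG2e hFe.
rewrite (evinv _ mG1i) //; evsimp; monoc.
Qed.

Lemma hC6 : hh C6 = evm mC6.
Proof.
have U1 := allU_Fr _ inG1; have U2 := allU_Fr _ inG2.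
have U22 : G2 * G2 \is a GRing.unit by rewrite unitrMl.
rewrite /C6 /Bmx !exprS !expr0 !mulr1 !hhM !hhV // !hhM hG1e hG2e hFe.
rewrite (evinv _ mG1i) // evm_mul // (evinv _ (f3 0 1 2, f3 4 10 4)) //; evsimp; monoc.
Qed.
Arguments L_Dev {z}. Arguments L_hD {x}. Arguments L_QFr {z}. Arguments kap_g {x m}. Arguments gmap_ev {x m}.

Theorem theorem8 :
  (exists g : M3 -> M3,
    [/\ forall x, gen Fr162x4 x -> gen D18 (g x),
        forall x y, gen Fr162x4 x -> gen Fr162x4 y -> g (x * y) = g x * g y,
        forall x y, gen Fr162x4 x -> gen Fr162x4 y -> g x = g y -> x = y,
        forall z, gen D18 z -> exists2 x, gen Fr162x4 x & g x = z
      & [/\ g H3 = Emx ^+ 2, g H1 = Btil * Emx, g C18 = gC18 & g C6 = gC6]])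
  /\ gC18 = Fmx ^+ 2 * (Emx ^+ 2 * Fmx * Emx * Fmx^-1) ^+ 3
  /\ gC6 = Emx * gC18 * (Emx ^+ 2)^-1 * gC18 ^+ 8 * (Emx ^+ 2)^-1 * gC18 ^+ 3.
Proof.
split; last split.
- exists gmap; split.
  + move=> x Hx; have [m gm Hm] := L_Dev (L_hD Hx).
    rewrite /gmap Hm kap_ev // -exprM -mulnA -Hm; apply: gen_scal; exact: L_hD.
  + move=> x y Hx Hy.
    have [mx gx Ex] := L_Dev (L_hD Hx); have [my gy Ey] := L_Dev (L_hD Hy).
    have /andP [vx ix] := gx; have /andP [vy iy] := gy.
    have Hk : kap (evm (mmul mx my)) = kap (evm mx) * kap (evm my).
      rewrite !kap_ev ?good_mul // /= mulnDr exprD; congr (_ * _); apply: z6mod.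
      by apply: inv3_all => //; apply: valid_all.
    rewrite /gmap hhM Ex Ey {1}evm_mul // Hk exprMn -scalerAl -scalerAr scalerA.
    by rewrite mulrC.
  + move=> x y Hx Hy Hg.
    have [mx gx Ex] := L_Dev (L_hD Hx); have [my gy Ey] := L_Dev (L_hD Hy).
    have Hkk : kap (hh x) = kap (hh y) by rewrite -(kap_g Ex gx) -(kap_g Ey gy) Hg.
    have Hne : kap (hh y) ^+ 2 != 0.
      by rewrite expf_neq0 // Ey kap_ev // expf_neq0 // zeta_neq0.
    move: Hg; rewrite /gmap Hkk => /(scalerI Hne) Hh.
    by rewrite -(unhh x) -(unhh y) Hh.
  + move=> z Hz; have [m gm Hm] := L_Dev Hz.
    exists (Qm * (zeta ^+ (6 * m.2 0) *: z) * Pm).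
      by apply: L_QFr; apply: gen_scal.
    have c6 : zeta ^+ (6 * m.2 0) ^+ 6 = 1 by exact: (zc_pow _ 2).
    have c3 : zeta ^+ (6 * m.2 0) ^+ 3 = 1 by exact: (zc_pow _ 1).
    rewrite /gmap hhQ kapZ Hm kap_ev // c6 mul1r scalerA -exprSr c3.
    by rewrite scale1r.
  + split.
    * rewrite (gmap_ev hH3e) //; rewrite Ee; evsimp; monoc.
    * rewrite (gmap_ev hH1e) //; rewrite Ee Be; evsimp; monoc.
    * rewrite (gmap_ev hC18) //; rewrite gC18e; monoc.
    * rewrite (gmap_ev hC6) //; rewrite gC6e; monoc.
- rewrite gC18e Fi Fe Ee; evsimp; monoc.
- have E2 : Emx ^+ 2 = evm (f3 2 0 1, f3 0 0 0) by rewrite Ee; evsimp; monoc.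
  rewrite gC6e gC18e E2 (evinv _ (f3 1 2 0, f3 0 0 0)) // Ee; evsimp; monoc.
Qed.
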